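(* The Eulerian polynomials $A_n(q)=\sum_{k=0}^nA(n,k)q^k$, $n\ge 0$, form a $q$-log-convex sequence.
   Context: The Eulerian numbers $A(n,k)$ are given by $A(0,0)=1$, $A(n,k)=0$ unless $0\le k\le n$, and $A(n,k)=kA(n-1,k)+(n-k+1)A(n-1,k-1)$ for $n\ge 1$; for $n\ge1$, $A(n,k)$ is the number of permutations of $\{1,\dots,n\}$ with exactly $k-1$ descents. For real polynomials $f,g$ write $f\le_q g$ if $g-f$ has nonnegative coefficients; a sequence $\{P_n(q)\}_{n\ge0}$ is $q$-log-convex if $P_n(q)^2\le_q P_{n-1}(q)P_{n+1}(q)$ for all $n\ge 1$. *)

(* Defs.v *)
From HB Require Import structures.
From mathcomp Require Import all_boot all_order all_algebra.
Set Implicit Arguments. Unset Strict Implicit. Unset Printing Implicit Defensive.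
Import Order.TTheory GRing.Theory Num.Theory.

(* Eulerian numbers A(n,k): A(0,0)=1, A(0,k)=0 for k>0,
   A(n,0)=0 for n>=1 (since A(n-1,-1)=0 and k=0),
   A(n,k) = k*A(n-1,k) + (n-k+1)*A(n-1,k-1) for n>=1, k>=1.
   For k > n this yields 0 automatically (coefficient (n-k+1) is truncated, but
   then A(n-1,k-1)=0 and A(n-1,k)=0 anyway). *)
Fixpoint eulerian (n k : nat) {struct n} : nat :=
  match n with
  | 0 => if k == 0 then 1 else 0
  | n'.+1 =>
      match k with
      | 0 => 0
      | k'.+1 => k * eulerian n' k + (n - k + 1) * eulerian n' k'
      end
  end.

Definition eulerian_poly (n : nat) : {poly int} :=
  \sum_(0 <= k < n.+1) (eulerian n k)%:R *: 'X^k.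

Local Open Scope ring_scope.

Definition qle (f g : {poly int}) : Prop := forall i : nat, 0 <= (g - f)`_i.

Definition q_log_convex (P : nat -> {poly int}) : Prop :=
  forall n : nat, (1 <= n)%N -> qle (P n ^+ 2) (P n.-1 * P n.+1).

(* Main.v *)
From HB Require Import structures.
Require Import Defs.
From mathcomp Require Import all_boot all_order all_algebra.
From mathcomp Require Import ring zify.
Set Implicit Arguments. Unset Strict Implicit. Unset Printing Implicit Defensive.
Import Order.TTheory GRing.Theory Num.Theory.
Local Open Scope ring_scope.

Definition nng (p : {poly int}) : Prop := forall i : nat, 0 <= p`_i.

Lemma nngD p q : nng p -> nng q -> nng (p + q).
Proof. by move=> hp hq i; rewrite coefD addr_ge0. Qed.

Lemma nngM p q : nng p -> nng q -> nng (p * q).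
Proof.
move=> hp hq i; rewrite coefM; apply: sumr_ge0 => j _; exact: mulr_ge0.
Qed.

Lemma nngN (n : nat) : nng n%:R.
Proof. by move=> i; rewrite coefMn coef1 mulrn_wge0. Qed.

Lemma nngX : nng 'X.
Proof. by move=> i; rewrite coefX. Qed.

Lemma nng0 : nng 0.
Proof. by move=> i; rewrite coef0. Qed.

Lemma nng_sum (F : nat -> {poly int}) m N :
  (forall a, nng (F a)) -> nng (\sum_(m <= a < N) F a).
Proof.
move=> h; elim/big_ind: _ => //; [exact: nng0 | exact: nngD].
Qed.

Lemma deriv1 : (1 : {poly int})^`() = 0.
Proof. by rewrite -polyC1 derivC. Qed.

Definition dE := (derivD, derivB, derivN, derivMNn, derivM, derivX, derivMn, deriv1, mul0rn).

Fixpoint E (n k : nat) : {poly int} :=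
  match n with
  | 0 => (k == 0)%:R
  | n'.+1 => (if k is k'.+1 then E n' k' else 0) + k%:R * E n' k
             + n'.+1%:R * 'X * E n' k + 'X * (1 - 'X) * (E n' k)^`()
  end.

Lemma eq_lin3 (L R a b c d g h ca cc cg : {poly int}) :
  a = b -> c = d -> g = h ->
  L - R = ca * (a - b) + cc * (c - d) + cg * (g - h) -> L = R.
Proof.
move=> -> -> -> /eqP; rewrite !subrr !mulr0 !addr0 subr_eq0 => /eqP //.
Qed.

Lemma K n k : (n%:R - k%:R) * E n k + (1 - 'X) * (E n k)^`()
   = (k.+1 * k.+1)%:R * E n k.+1.
Proof.
elim: n k => [|n IH] k.
  case: k => [|k] /=; rewrite !dE; ring.
have e1 := IH k.
have e2 := congr1 deriv e1; rewrite !dE in e2.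
case: k e1 e2 => [|k] e1 e2.
  apply: (eq_lin3 (ca := (1%:R + n.+1%:R * 'X)) (cc := 'X * (1 - 'X)) (cg := 0) e1 e2 (erefl 0)).
  rewrite /= !dE; ring.
have e3 := IH k.
apply: (eq_lin3 (ca := (k.+2%:R + n.+1%:R * 'X)) (cc := 'X * (1 - 'X)) (cg := 1) e1 e2 e3).
rewrite [E n.+1 _]/= [E n.+1 _]/= !dE; ring.
Qed.

Definition bb (k : nat) : {poly int} := k%:R + k.+1%:R * 'X.
Definition lam (j : nat) : {poly int} := (j * j)%:R * 'X.

Lemma motz n k : E n.+1 k =
  (if k is k'.+1 then E n k' else 0) + bb k * E n k + lam k.+1 * E n k.+1.
Proof.
have e1 := K n k.
apply: (eq_lin3 (ca := 'X) (cc := 0) (cg := 0) e1 (erefl 0) (erefl 0)).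
rewrite /= /bb /lam; ring.
Qed.

Lemma nng_bb k : nng (bb k).
Proof. apply: nngD; [exact: nngN | apply: nngM; [exact: nngN|exact: nngX]]. Qed.
Lemma nng_lam k : nng (lam k).
Proof. apply: nngM; [exact: nngN|exact: nngX]. Qed.

Lemma E_nng n k : nng (E n k).
Proof.
elim: n k => [|n IH] k; first exact: nngN.
rewrite motz; apply: nngD; [apply: nngD|].
- by case: k => [|k]; [exact: nng0 | exact: IH].
- by apply: nngM; [exact: nng_bb | exact: IH].
- by apply: nngM; [exact: nng_lam | exact: IH].
Qed.

Lemma sum_delta (R : pzRingType) (F : nat -> R) c N :
  \sum_(0 <= a < N) F a * (a == c)%:R = if (c < N)%N then F c else 0.
Proof.
elim: N => [|N IH]; first by rewrite big_geq.
rewrite big_nat_recr //= IH.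
case: (ltngtP c N) => H.
- have -> : (c < N.+1)%N by lia.
  by rewrite mulr0 addr0.
- have -> : (c < N.+1)%N = false by lia.
  by rewrite mulr0 addr0.
- by rewrite H ltnSn mulr1 add0r.
Qed.

Definition Qm (a k : nat) : {poly int} :=
  (a.+1 == k)%:R + bb k * (a == k)%:R + lam k.+1 * (a == k.+1)%:R.

Lemma motz_sum n k N : (k.+2 <= N)%N ->
  E n.+1 k = \sum_(0 <= a < N) E n a * Qm a k.
Proof.
move=> hN.
rewrite motz.
rewrite (eq_bigr (fun a => E n a * (a.+1 == k)%:R + (E n a * bb k) * (a == k)%:R
   + (E n a * lam k.+1) * (a == k.+1)%:R)); last by move=> a _; rewrite /Qm; ring.
rewrite !big_split /= !sum_delta.
have -> : (k < N)%N by lia.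
have -> : (k.+1 < N)%N by lia.
congr (_ + _ + _); try by rewrite mulrC.
case: k hN => [|k] hN.
  by rewrite big1 // => a _; rewrite mulr0.
rewrite (sum_delta (fun a => E n a) k).
have -> : (k < N)%N by lia.
done.
Qed.

Lemma CB (x u y v : nat -> {poly int}) N :
  (\sum_(0 <= a < N) x a * y a) * (\sum_(0 <= a < N) u a * v a)
  - (\sum_(0 <= a < N) x a * v a) * (\sum_(0 <= a < N) u a * y a)
  = \sum_(0 <= a < N) \sum_(0 <= b < a) (x b * u a - x a * u b) * (y b * v a - y a * v b).
Proof.
elim: N => [|N IH]; first by rewrite !big_geq // mulr0 subrr.
rewrite !big_nat_recr //= -IH.
have -> : \sum_(0 <= b < N) (x b * u N - x N * u b) * (y b * v N - y N * v b)
  = \sum_(0 <= b < N) ((x b * y b) * (u N * v N) - (x b * v b) * (u N * y N)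
       - (u b * y b) * (x N * v N) + (u b * v b) * (x N * y N)).
  by apply: eq_bigr => b _; ring.
rewrite big_split /= !sumrB -!mulr_suml.
ring.
Qed.

Lemma Qm0 a k : (k.+1 < a)%N \/ (a.+1 < k)%N -> Qm a k = 0.
Proof.
move=> H; rewrite /Qm.
rewrite (_ : (a.+1 == k) = false); last by lia.
rewrite (_ : (a == k) = false); last by lia.
rewrite (_ : (a == k.+1) = false); last by lia.
by rewrite !mulr0 !addr0.
Qed.

Lemma nng_Qm a k : nng (Qm a k).
Proof.
rewrite /Qm; apply: nngD; [apply: nngD|].
- exact: nngN.
- apply: nngM; [exact: nng_bb|exact: nngN].
- apply: nngM; [exact: nng_lam|exact: nngN].
Qed.

Lemma Qminor b a k l : (b < a)%N -> (k < l)%N ->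
  nng (Qm b k * Qm a l - Qm a k * Qm b l).
Proof.
move=> hba hkl.
case: (boolP ((l <= b.+1)%N && (a <= k.+1)%N)) => H.
  have ea : a = b.+1 by lia.
  have ek : k = b by lia.
  have el : l = b.+1 by lia.
  subst a k l.
  have q1 : Qm b b = bb b.
    rewrite /Qm eqxx (_ : (b.+1 == b) = false); last by lia.
    rewrite (_ : (b == b.+1) = false); last by lia.
    by rewrite mulr0 addr0 mulr1 add0r.
  have q2 : Qm b.+1 b.+1 = bb b.+1.
    rewrite /Qm eqxx (_ : (b.+2 == b.+1) = false); last by lia.
    rewrite (_ : (b.+1 == b.+2) = false); last by lia.
    by rewrite mulr0 addr0 mulr1 add0r.
  have q3 : Qm b.+1 b = lam b.+1.
    rewrite /Qm eqxx (_ : (b.+2 == b) = false); last by lia.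
    rewrite (_ : (b.+1 == b) = false); last by lia.
    by rewrite mulr0 addr0 mulr1 add0r.
  have q4 : Qm b b.+1 = 1.
    rewrite /Qm eqxx (_ : (b == b.+1) = false); last by lia.
    rewrite (_ : (b == b.+2) = false); last by lia.
    by rewrite !mulr0 !addr0.
  rewrite q1 q2 q3 q4.
  have -> : bb b * bb b.+1 - lam b.+1 * 1
      = (b * b.+1)%:R + (b * b.+2)%:R * 'X + (b.+1 * b.+2)%:R * ('X * 'X).
    by rewrite /bb /lam; ring.
  apply: nngD; [apply: nngD|].
  - exact: nngN.
  - apply: nngM; [exact: nngN|exact: nngX].
  - apply: nngM; [exact: nngN|apply: nngM; exact: nngX].
rewrite (_ : Qm a k * Qm b l = 0).
  by rewrite subr0; apply: nngM; exact: nng_Qm.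
move: H; rewrite negb_and -!ltnNge => /orP [H|H].
  by rewrite (Qm0 (a := b) (k := l)) ?mulr0 //; lia.
by rewrite (Qm0 (a := a) (k := k)) ?mul0r //; lia.
Qed.

Lemma TP n k l : (k < l)%N -> nng (E n k * E n.+1 l - E n l * E n.+1 k).
Proof.
elim: n k l => [|n IH] k l hkl.
  rewrite [E 0 l]/= (_ : (l == 0) = false); last by lia.
  by rewrite mul0r subr0; apply: nngM; [exact: nngN|exact: E_nng].
rewrite (@motz_sum n k l.+2) //; last by lia.
rewrite (@motz_sum n l l.+2) //.
rewrite (@motz_sum n.+1 l l.+2) //.
rewrite (@motz_sum n.+1 k l.+2) //; last by lia.
rewrite CB.
rewrite big_nat; apply: big_ind => [|p r|a /andP [_ ha]]; [exact: nng0|exact: nngD|].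
rewrite big_nat; apply: big_ind => [|p r|b /andP [_ hb]]; [exact: nng0|exact: nngD|].
apply: nngM; first exact: IH.
exact: Qminor.
Qed.

Lemma eulerian_gt n k : (n < k)%N -> eulerian n k = 0%N.
Proof.
elim: n k => [|n IH] [|k] //= H.
rewrite !IH //; lia.
Qed.

Lemma coef_ep n i : (eulerian_poly n)`_i = (eulerian n i)%:R.
Proof.
rewrite /eulerian_poly coef_sum.
rewrite (eq_bigr (fun k => (eulerian n k)%:R * (k == i)%:R)); last first.
  by move=> k _; rewrite coefZ coefXn eq_sym.
rewrite sum_delta; case: ltnP => // H.
by rewrite eulerian_gt.
Qed.

Lemma ep_rec n : eulerian_poly n.+1 =
  n.+1%:R * 'X * eulerian_poly n + 'X * (1 - 'X) * (eulerian_poly n)^`().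
Proof.
apply/polyP => i.
rewrite coefD -!mulrA mulr_natl coefMn !coefXM coef_ep.
case: i => [|j] /=; first by rewrite mul0rn addr0.
rewrite mulrBl mul1r coefB coefXM coef_deriv !coef_ep.
have -> : (if j == 0%N then 0 else (eulerian_poly n)^`()`_j.-1) = (eulerian n j)%:R *+ j.
  by case: j => [|k] /=; rewrite ?mulr0n // coef_deriv coef_ep.
case: (leqP j n) => hj.
  have -> : (n.+1 - j.+1 + 1 = (n - j) + 1)%N by lia.
  rewrite natrD !natrM natrD natrB //; ring.
rewrite !eulerian_gt //; last by lia.
by rewrite !muln0 /= !mul0rn; ring.
Qed.


Lemma ep_E n : eulerian_poly n = E n 0.
Proof.
elim: n => [|n IH].
  apply/polyP => i; rewrite coef_ep /=.
  by rewrite coef1; case: i.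
rewrite ep_rec IH /=; ring.
Qed.

Theorem proposition4p6 : q_log_convex eulerian_poly.
Proof.
move=> [|m] // _; rewrite /qle /=.
rewrite !ep_E.
have h1 := motz m.+1 0.
have h0 := motz m 0.
have -> : E m 0 * E m.+2 0 - E m.+1 0 ^+ 2 =
          'X * (E m 0 * E m.+1 1 - E m 1 * E m.+1 0).
  apply: (eq_lin3 (ca := E m 0) (cc := - E m.+1 0) (cg := 0) h1 h0 (erefl 0)).
  rewrite /bb /lam /=; ring.
apply: nngM; first exact: nngX.
exact: TP.
Qed.
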